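(* Let $k\ge2$ be an integer. If $\Delta>0$ is sufficiently large, then there exists $\epsilon > 0$ such that, as $z = \eta + iy \to 0$ within the region $\Delta \eta \leq |y| \leq \pi$ (with $\eta>0$), writing $q=e^{-z}$, \[ |\xi_k(q)| \ll_{k,\Delta} \xi_k(|q|)e^{-\epsilon/\eta}. \]
   Context: $\xi_k(q) \coloneqq \frac{(q^k;q^k)_\infty}{(q;q)_\infty}$, where $(a;q)_\infty \coloneqq \prod_{n\ge1}(1-aq^{n-1})$. *)

(* Defs.v *)
From mathcomp Require Import all_boot all_order all_algebra.
From mathcomp Require Import all_classical all_reals all_analysis.
From mathcomp Require Import complex.
Import Order.TTheory GRing.Theory Num.Theory.
Import numFieldNormedType.Exports.
Local Open Scope ring_scope.
Local Open Scope classical_set_scope.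

Definition qpoch_inf {K : numFieldType} (a q : K) : K :=
  lim ((fun N : nat => \prod_(n < N) (1 - a * q ^+ n)) @ \oo).

Definition xi {K : numFieldType} (k : nat) (q : K) : K :=
  qpoch_inf (q ^+ k) (q ^+ k) / qpoch_inf q q.

(* q = e^{-z} for z = eta + i y, i.e. e^{-eta} (cos y - i sin y) *)
Definition qexp {R : realType} (eta y : R) : R[i] :=
  ((expR (- eta) * cos y) +i* (- (expR (- eta) * sin y)))%C.

(* Main.v *)
Require Import Defs.
From mathcomp Require Import all_boot all_order all_algebra.
From mathcomp Require Import all_classical all_reals all_analysis.
From mathcomp Require Import complex.
From mathcomp Require Import ring lra zify.
Import Order.TTheory GRing.Theory Num.Theory.
Import numFieldNormedType.Exports.
Local Open Scope ring_scope.

Section Trig.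
Local Open Scope classical_set_scope.
Variable R : realType.

Lemma sin_le_id (u : R) : 0 <= u -> sin u <= u.
Proof.
move=> u0.
have D (x : R) : is_derive x 1 (fun v : R => v - sin v) (1 - cos x) by apply: is_deriveB.
have H := @ger0_derive1_ndecry R (fun v => v - sin v) 0.
suff : 0 - sin 0 <= u - sin u by rewrite sin0 subr0 subr_ge0.
apply: H => //.
- move=> x _; rewrite derive1E (@derive_val _ _ _ _ _ _ _ (D x)).
  by rewrite subr_ge0 cos_le1.
- apply: continuous_subspaceT => x.
  apply: continuousB; first exact: cvg_id.
  exact: continuous_sin.
Qed.

Lemma cos_ge_half (t : R) : 0 <= t <= 1 -> 1/2 <= cos t.
Proof.
case/andP=> t0 t1.
have -> : t = (t/2) *+ 2 by rewrite -mulr_natr mulfVK.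
rewrite cos_mulr2n cos2sin2.
have h1 : 0 <= sin (t/2).
  apply: sin_ge0_pi; rewrite divr_ge0 //= (le_trans _ (@pi_ge2 R)) //.
  rewrite ler_pdivrMr //; lra.
have h2 : sin (t/2) <= t/2 by apply: sin_le_id; rewrite divr_ge0.
have h3 : sin (t/2) ^+ 2 <= (t/2)^+2 by rewrite ler_pXn2r // ?nnegrE // (le_trans h1 h2).
have h4 : (t/2)^+2 <= 1/4.
  have : 0 <= t/2 <= 1/2 by apply/andP; split; lra.
  move=> /andP[a b]. rewrite expr2. 
  have -> : (1/4 : R) = 1/2 * (1/2) by field.
  by apply: ler_pM.
lra.
Qed.

Lemma sin_ge_half (t : R) : 0 <= t <= 1 -> t / 2 <= sin t.
Proof.
case/andP=> t0 t1.
have D (x : R) : is_derive x 1 (fun v : R => 2 *: sin v - v) (2 *: cos x - 1) by apply: is_deriveB.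
have H := @ger0_derive1_ndecr R (fun v => 2 *: sin v - v) 0 1.
suff : 2 *: sin 0 - 0 <= 2 *: sin t - t.
  rewrite sin0 scaler0 subr0 subr_ge0 => h. 
  rewrite -(@ler_pM2l _ 2) //; move: h; rewrite /GRing.scale /=. lra.
apply: H => //.
- move=> x; rewrite in_itv /= => /andP[x0 x1]; rewrite derive1E (@derive_val _ _ _ _ _ _ _ (D x)).
  have h : 1/2 <= cos x by apply: cos_ge_half; rewrite !ltW.
  rewrite /GRing.scale /=; lra.
- apply: continuous_subspaceT => x.
  apply/differentiable_continuous/derivable1_diffP. exact: (@ex_derive _ _ _ _ _ _ _ (D x)).
Qed.
End Trig.
Section C.
Local Open Scope classical_set_scope.
Variable R : realType.
Import Normc.

Definition CC : numFieldType := R[i].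

Lemma normC_def (x : CC) : `|x| = ((normc x)%:C)%C.
Proof. by []. Qed.

Lemma cvgC_normP (u : nat -> CC) (L : CC) :
  u @ \oo --> L <-> (forall e : R, 0 < e -> \forall n \near \oo, normc (L - u n) < e).
Proof.
split.
- move=> /cvgrPdist_lt H e e0.
  have := H ((e%:C)%C); rewrite ltcR => /(_ e0).
  by apply: filterS => n; rewrite normC_def ltcR.
- move=> H; apply/cvgrPdist_lt => eps.
  case: eps => a b; rewrite ltcE /= => /andP[/eqP b0 a0].
  apply: filterS (H a a0) => n hn.
  by rewrite normC_def ltcE /= b0 eqxx hn.
Qed.

Lemma Re_le_normc (z : R[i]) : `|complex.Re z| <= normc z.
Proof.
case: z => a b /=.
rewrite -sqrtr_sqr; apply: ler_wsqrtr; rewrite lerDl sqr_ge0 //.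
Qed.

Lemma Im_le_normc (z : R[i]) : `|complex.Im z| <= normc z.
Proof.
case: z => a b /=.
rewrite -sqrtr_sqr; apply: ler_wsqrtr; rewrite lerDr sqr_ge0 //.
Qed.

Lemma normc_le_ReIm (z : R[i]) : normc z <= `|complex.Re z| + `|complex.Im z|.
Proof.
case: z => a b /=.
rewrite -(@ler_pXn2r _ 2) ?nnegrE ?sqrtr_ge0 ?addr_ge0 //.
rewrite sqr_sqrtr ?addr_ge0 ?sqr_ge0 // sqrrD.
rewrite -[a ^+ 2](real_normK (num_real a)) -[b ^+ 2](real_normK (num_real b)).
by rewrite lerD2r lerDl mulrn_wge0 // mulr_ge0.
Qed.

Lemma normcX (z : R[i]) n : normc (z ^+ n) = normc z ^+ n.
Proof.
elim: n => [|n IH]; first by rewrite !expr0 normc1.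
by rewrite !exprS normcM IH.
Qed.

Lemma normc_ge0 (z : R[i]) : 0 <= normc z.
Proof. by case: z => a b; rewrite /= sqrtr_ge0. Qed.

Lemma normc_prod I (r : seq I) (P : pred I) (F : I -> R[i]) :
  normc (\prod_(i <- r | P i) F i) = \prod_(i <- r | P i) normc (F i).
Proof.
elim/big_rec2: _ => [|i x y _ <-]; first by rewrite normc1.
by rewrite normcM.
Qed.

Lemma normcB_ge (x y : R[i]) : normc x - normc y <= normc (x - y).
Proof.
have := le_normcD (x - y) y; rewrite subrK => h.
by rewrite lerBlDr.
Qed.

Lemma normcB (x y : R[i]) : normc (x - y) = normc (y - x).
Proof. by rewrite -normcN opprB. Qed.

End C.
Section Split.
Local Open Scope classical_set_scope.
Variable K : comRingType.
Variable k : nat.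
Hypothesis k0 : (0 < k)%N.

Definition pp (a q : K) (N : nat) := \prod_(n < N) (1 - a * q ^+ n).
Definition Dblk (q : K) (m : nat) := \prod_(j < k.-1) (1 - q ^+ (k * m + j).+1).
Definition DD (q : K) (M : nat) := \prod_(m < M) Dblk q m.

Lemma pp_split (q : K) M : pp q q (k * M) = pp (q ^+ k) (q ^+ k) M * DD q M.
Proof.
elim: M => [|M IH]; first by rewrite muln0 /pp /DD !big_ord0 mulr1.
rewrite mulnS addnC /pp big_split_ord -/(pp q q (k * M)) IH.
rewrite /DD !big_ord_recr /= -/(DD q M).
have -> : \prod_(i < k) (1 - q * q ^+ (k * M + i)) =
   Dblk q M * (1 - q ^+ k * (q ^+ k) ^+ M).
  rewrite -(prednK k0) big_ord_recr /= prednK //.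
  congr (_ * _).
    by apply: eq_bigr => i _; rewrite -exprS.
  rewrite -exprS -exprM -exprD; congr (1 - q ^+ _); rewrite -(prednK k0) mulSn; lia.
rewrite -/(pp (q ^+ k) (q ^+ k) M).
rewrite /pp. 
set A := \prod_(n < M) _; set B := 1 - _; set C := DD q M; set D := Dblk q M.
ring.
Qed.
End Split.
Section Real.
Local Open Scope classical_set_scope.
Variable R : realType.

Lemma geo_le (t : R) N : 0 <= t < 1 -> \sum_(n < N) t ^+ n <= (1 - t)^-1.
Proof.
case/andP=> t0 t1.
have e : (1 - t) * \sum_(n < N) t ^+ n = 1 - t ^+ N.
  elim: N => [|N IH]; first by rewrite big_ord0 mulr0 expr0 subrr.
  by rewrite big_ord_recr /= mulrDr IH exprS; ring.
rewrite -(@ler_pM2l _ (1 - t)) ?subr_gt0 // e mulfV ?subr_eq0 ?gt_eqF //.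
by rewrite gerBl exprn_ge0.
Qed.

Lemma prod_le_expR (f : nat -> R) N : (forall n, 0 <= f n) ->
  \prod_(n < N) (1 + f n) <= expR (\sum_(n < N) f n).
Proof.
move=> f0; rewrite expR_sum; apply: ler_prod => i _.
by rewrite addr_ge0 //= expR_ge1Dx.
Qed.

Lemma expR_half_le (x : R) : 0 <= x <= 1 -> expR (x / 2) <= 1 + x.
Proof.
case/andP=> x0 x1.
have h : 1 - x / 2 <= expR (- (x / 2)) by rewrite -[1 - _]/(1 + - (x/2)) expR_ge1Dx.
have hp : 0 < 1 - x / 2 by lra.
rewrite -[expR (x/2)]invrK -expRN.
rewrite -(@ler_pM2r _ (expR (- (x/2)))) ?expR_gt0 // mulVf ?gt_eqF ?expR_gt0 //.
apply: le_trans (ler_wpM2l _ h); first nra.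
lra.
Qed.

Lemma one_minus_ge (x t : R) : 0 <= x -> x <= t -> t < 1 ->
  expR (- (x / (1 - t))) <= 1 - x.
Proof.
move=> x0 xt t1.
set u := x / (1 - t).
have u0 : 0 <= u by rewrite divr_ge0 // subr_ge0 ltW.
have ut : u * (1 - t) = x by rewrite /u mulfVK // subr_eq0 gt_eqF.
have h : 1 + u <= expR u by apply: expR_ge1Dx.
have key : 1 <= (1 - x) * (1 + u) by nra.
rewrite expRN.
rewrite -(@ler_pM2r _ (expR u)) ?expR_gt0 // mulVf ?gt_eqF ?expR_gt0 //.
apply: (le_trans key); apply: ler_wpM2l => //; lra.
Qed.

Definition ppR (a q : R) (N : nat) := \prod_(n < N) (1 - a * q ^+ n).

Lemma ppR_lb (r : R) N : 0 <= r < 1 ->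
  expR (- ((1 - r)^-1 / (1 - r))) <= ppR r r N.
Proof.
case/andP=> r0 r1.
have hr n : 0 <= r * r ^+ n <= r.
  have a : 0 <= r ^+ n by rewrite exprn_ge0.
  have b : r ^+ n <= 1 by rewrite exprn_ile1 // ltW.
  apply/andP; split; nra.
have e : ppR r r N >= \prod_(n < N) expR (- ((r * r ^+ n) / (1 - r))).
  apply: ler_prod => n _; rewrite expR_ge0 /=.
  by case/andP: (hr n) => a b; apply: one_minus_ge.
apply: (@le_trans _ _ (\prod_(n < N) expR (- (r * r ^+ n / (1 - r))))); last exact: e.
rewrite -expR_sum ler_expR.
rewrite sumrN lerN2 -mulr_suml ler_wpM2r //; first by rewrite invr_ge0 subr_ge0 ltW.
have g : \sum_(n < N) r ^+ n <= (1 - r)^-1 by apply: geo_le; rewrite r0.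
apply: (le_trans _ g).
apply: ler_sum => n _; have a : 0 <= r ^+ n by rewrite exprn_ge0.
have b : r ^+ n <= 1 by rewrite exprn_ile1 // ltW.
nra.
Qed.

Lemma ppR_cvg (r : R) : 0 <= r < 1 -> cvgn (ppR r r) /\ 0 < limn (ppR r r).
Proof.
move=> /[dup] hr /andP[r0 r1].
set c := expR (- ((1 - r)^-1 / (1 - r))).
have lb N : c <= ppR r r N by apply: ppR_lb.
have dec : {homo ppR r r : n m / (n <= m)%N >-> m <= n}.
  apply/nonincreasing_seqP => n.
  rewrite /ppR big_ord_recr /= -/(ppR r r n).
  have p0 : 0 <= ppR r r n by apply: le_trans (lb n); rewrite expR_ge0.
  have f : 0 <= r * r ^+ n by rewrite mulr_ge0 ?exprn_ge0.
  nra.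
have cv : cvgn (ppR r r).
  apply: nonincreasing_is_cvgn => //.
  by exists c => _ [n _ <-].
split => //.
apply: (@lt_le_trans _ _ c); first exact: expR_gt0.
apply: limr_ge => //.
by apply: nearW => n; exact: lb.
Qed.
End Real.

Section Conv.
Local Open Scope classical_set_scope.
Variable R : realType.
Import Normc.

Lemma cvg_dom (a : nat -> R) (E t : R) : 0 <= t < 1 -> 0 <= E ->
  (forall N, `|a N| <= E) -> (forall N, `|a N.+1 - a N| <= E * t ^+ N) ->
  cvgn a.
Proof.
move=> /[dup] ht /andP[t0 t1] E0 ha hd.
pose g N := E * \sum_(j < N) t ^+ j.
have gb N : g N <= E * (1 - t)^-1 by rewrite /g ler_wpM2l // geo_le.
have ginc : {homo g : n m / (n <= m)%N >-> n <= m}.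
  apply/nondecreasing_seqP => n; rewrite /g big_ord_recr /= mulrDr lerDl.
  by rewrite mulr_ge0 // exprn_ge0.
have gc : cvgn g.
  by apply: nondecreasing_is_cvgn => //; exists (E * (1 - t)^-1) => _ [n _ <-].
pose v N := a N + g N.
have vinc : {homo v : n m / (n <= m)%N >-> n <= m}.
  apply/nondecreasing_seqP => n; rewrite /v /g big_ord_recr /= mulrDr.
  have := hd n; rewrite ler_norml => /andP[h1 h2].
  lra.
have vc : cvgn v.
  apply: nondecreasing_is_cvgn => //; exists (E + E * (1 - t)^-1) => _ [n _ <-].
  rewrite /v; apply: lerD => //.
  by apply: le_trans (ha n); apply: ler_norm.
have -> : a = v - g by apply/funext => n; rewrite /v !fctE addrK.
exact: is_cvgB.
Qed.

Lemma ReB (x y : CC R) : complex.Re (x - y) = complex.Re x - complex.Re y.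
Proof. by case: x => ? ?; case: y. Qed.
Lemma ImB (x y : CC R) : complex.Im (x - y) = complex.Im x - complex.Im y.
Proof. by case: x => ? ?; case: y. Qed.

Lemma ppC_cvg (w : CC R) : normc w < 1 ->
  cvg ((fun N => \prod_(n < N) (1 - w * w ^+ n)) @ \oo).
Proof.
move=> w1.
set P := fun N => _.
set t := normc w.
have t0 : 0 <= t by apply: normc_ge0.
have ht : 0 <= t < 1 by rewrite t0.
set E := expR ((1 - t)^-1).
have E0 : 0 <= E by apply: expR_ge0.
have tn n : 0 <= t ^+ n <= 1 by rewrite exprn_ge0 // exprn_ile1 // ltW.
have hb N : normc (P N) <= E.
  rewrite /P normc_prod.
  have h1 : \prod_(n < N) normc (1 - w * w ^+ n) <= \prod_(n < N) (1 + t * t ^+ n).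
    apply: ler_prod => n _; rewrite normc_ge0 /=.
    have := le_normcD (1 : Rcomplex R) (- (w * w ^+ n) : Rcomplex R).
    rewrite normcN normcM normcX normc1 => h; exact: h.
  apply: (le_trans h1).
  have h2 := @prod_le_expR R (fun n => t * t ^+ n) N.
  apply: le_trans (h2 _) _.
    by move=> n; rewrite mulr_ge0 ?exprn_ge0.
  rewrite ler_expR; apply: (@le_trans _ _ (\sum_(n < N) t ^+ n)); last exact: geo_le.
  apply: ler_sum => n _; case/andP: (tn n) => a b; nra.
have hd N : normc (P N.+1 - P N) <= E * t ^+ N.
  have -> : P N.+1 - P N = - (P N * (w * w ^+ N)).
    by rewrite /P big_ord_recr /=; ring.
  rewrite normcN !normcM normcX -/t.
  case/andP: (tn N) => a b.
  have := hb N; have := @normc_ge0 R (P N) => c d.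
  rewrite mulrA; apply: ler_pM => //; first by rewrite mulr_ge0.
  have : t <= 1 by rewrite ltW.
  nra.
have cRe : cvgn (fun N => complex.Re (P N)).
  apply: (@cvg_dom _ E t) => // N.
    exact: le_trans (@Re_le_normc R _) (hb N).
  by rewrite -ReB; exact: le_trans (@Re_le_normc R _) (hd N).
have cIm : cvgn (fun N => complex.Im (P N)).
  apply: (@cvg_dom _ E t) => // N.
    exact: le_trans (@Im_le_normc R _) (hb N).
  by rewrite -ImB; exact: le_trans (@Im_le_normc R _) (hd N).
pose L : CC R := (limn (fun N => complex.Re (P N)) +i* limn (fun N => complex.Im (P N)))%C.
apply/cvg_ex; exists L.
apply/cvgC_normP => e e0.
have e20 : 0 < e / 2 by rewrite divr_gt0.
move/cvgrPdist_lt: cRe => /(_ _ e20) hRe.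
move/cvgrPdist_lt: cIm => /(_ _ e20) hIm.
near=> n.
apply: le_lt_trans (@normc_le_ReIm R _) _.
rewrite ReB ImB.
have h1 : `|limn (fun N => complex.Re (P N)) - complex.Re (P n)| < e / 2 by near: n.
have h2 : `|limn (fun N => complex.Im (P N)) - complex.Im (P n)| < e / 2 by near: n.
rewrite /L /=.
lra.
Unshelve. all: by end_near.
Qed.
End Conv.


Section Q.
Local Open Scope classical_set_scope.
Variable R : realType.
Import Normc.

Definition qc (rho y : R) : CC R := ((rho * cos y) +i* (- (rho * sin y)))%C.

Lemma qc_pow rho y n : qc rho y ^+ n = qc (rho ^+ n) (n%:R * y).
Proof.
elim: n => [|n IH].
  by rewrite expr0 /qc mul0r cos0 sin0 !mulr1 mulr0 oppr0.
rewrite exprS IH /qc.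
rewrite -addn1 natrD mulrDl mul1r cosD sinD exprD expr1.
apply/eqP; rewrite eq_complex /=; apply/andP; split; apply/eqP; ring.
Qed.

Lemma normc_qc rho y : 0 <= rho -> normc (qc rho y) = rho.
Proof.
move=> r0.
have e : (rho * cos y) ^+ 2 + (- (rho * sin y)) ^+ 2 = rho ^+ 2.
  by rewrite sqrrN !exprMn -mulrDr cos2Dsin2 mulr1.
by rewrite /qc /= e sqrtr_sqr ger0_norm.
Qed.

Lemma normc_1qc_sq rho y : normc (1 - qc rho y) ^+ 2 = 1 - 2 * rho * cos y + rho ^+ 2.
Proof.
rewrite /qc /= sqr_sqrtr; last by rewrite addr_ge0 ?sqr_ge0.
have := cos2Dsin2 y => h.
rewrite opprK. 
transitivity (1 - 2 * rho * cos y + rho ^+ 2 * (cos y ^+ 2 + sin y ^+ 2)); last by rewrite h mulr1.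
ring.
Qed.

Lemma fac_lb rho y : 1/2 <= rho -> rho <= 1 ->
  (1 - rho) ^+ 2 * (1 + (1 - cos y) / 2) <= normc (1 - qc rho y) ^+ 2.
Proof.
move=> r1 r2; rewrite normc_1qc_sq.
have c1 := cos_le1 y; have c2 := cos_geN1 y.
have h : 0 <= (1 - cos y) * (2 * rho - (1 - rho) ^+ 2 / 2).
  apply: mulr_ge0; first lra.
  rewrite subr_ge0 expr2; nra.
have e : 1 - 2 * rho * cos y + rho ^+ 2 - (1 - rho) ^+ 2 * (1 + (1 - cos y) / 2)
   = (1 - cos y) * (2 * rho - (1 - rho) ^+ 2 / 2).
  by field.
rewrite -subr_ge0 e //.
Qed.

Lemma fac_lb0 rho y : 0 <= rho -> 1 - rho <= normc (1 - qc rho y).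
Proof.
move=> r0; have := @normcB_ge R 1 (qc rho y).
by rewrite normc1 normc_qc.
Qed.
End Q.

Section B.
Local Open Scope classical_set_scope.
Variable R : realType.
Import Normc.

Lemma prod_ge (r y : R) I (s : seq I) (P : pred I) (g : I -> nat) : 0 <= r <= 1 ->
  0 <= \prod_(i <- s | P i) (1 - r ^+ g i) /\
  \prod_(i <- s | P i) (1 - r ^+ g i) <= normc (\prod_(i <- s | P i) (1 - qc R r y ^+ g i)).
Proof.
case/andP=> r0 r1.
have h i : 0 <= 1 - r ^+ g i by rewrite subr_ge0 exprn_ile1.
split; first by apply: prodr_ge0 => i _.
rewrite normc_prod; apply: ler_prod => i _; rewrite h /=.
rewrite qc_pow; apply: fac_lb0; exact: exprn_ge0.
Qed.

Lemma blk_ge (r y : R) k m : 0 <= r <= 1 ->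
  0 <= Dblk R k r m /\ Dblk R k r m <= normc (Dblk (CC R) k (qc R r y) m).
Proof. by move=> h; rewrite /Dblk; apply: prod_ge. Qed.

Lemma blk_ge2 (r y : R) k m : (1 < k)%N -> 0 <= r <= 1 ->
  1/2 <= r ^+ (k * m).+1 ->
  (Dblk R k r m) ^+ 2 * (1 + (1 - cos (((k * m).+1)%:R * y)) / 2)
    <= normc (Dblk (CC R) k (qc R r y) m) ^+ 2.
Proof.
move=> k1 /[dup] hr /andP[r0 r1] hh.
rewrite /Dblk.
have -> : k.-1 = (k - 2).+1 by lia.
rewrite !big_ord_recl /= normcM addn0.
have [b0 b1] := @prod_ge r y _ (index_enum 'I_(k-2)) xpredT
   (fun i : 'I_(k-2) => (k * m + lift ord0 i).+1) hr.
set b := \prod_(_ <- _ | _) _ in b0 b1 *.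
set B := normc _ in b1 *.
have rn : r ^+ (k * m).+1 <= 1 by rewrite exprn_ile1.
have f := @fac_lb R _ ((k * m).+1%:R * y) hh rn.
rewrite qc_pow.
set A := normc _ in f *.
set a := 1 - _ in f *.
have a0 : 0 <= a by rewrite /a subr_ge0.
have x0 : 0 <= (1 + (1 - cos ((k * m).+1%:R * y)) / 2).
  have := cos_le1 ((k * m).+1%:R * y); lra.
rewrite !exprMn mulrAC.
apply: ler_pM.
- by rewrite mulr_ge0 // sqr_ge0.
- exact: sqr_ge0.
- exact: f.
- by rewrite ler_pXn2r // ?nnegrE // (le_trans b0 b1).
Qed.

Lemma DD_ge (r y : R) k M (x : nat -> R) : 0 <= r <= 1 -> (forall m, 0 <= x m) ->
  (forall m, (Dblk R k r m) ^+ 2 * (1 + x m) <= normc (Dblk (CC R) k (qc R r y) m) ^+ 2) ->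
  (DD R k r M) ^+ 2 * \prod_(m < M) (1 + x m) <= normc (DD (CC R) k (qc R r y) M) ^+ 2.
Proof.
move=> hr x0 hx.
elim: M => [|M IH]; first by rewrite /DD !big_ord0 normc1 expr1n mulr1.
rewrite /DD !big_ord_recr /= -!/(DD _ k _ M) normcM !exprMn.
rewrite mulrACA.
apply: ler_pM => //.
- rewrite mulr_ge0 ?sqr_ge0 // prodr_ge0 // => i _; have := x0 i; lra.
- by rewrite mulr_ge0 ?sqr_ge0 //; have := x0 M; lra.
Qed.
End B.

Section S.
Local Open Scope classical_set_scope.
Variable R : realType.

Lemma cos_tele (a b : R) L :
  (sin (b / 2) * \sum_(m < L) cos (a + m%:R * b)) *+ 2 =
  sin (a + L%:R * b - b / 2) - sin (a - b / 2).
Proof.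
elim: L => [|L IH]; first by rewrite big_ord0 mulr0 mul0rn mul0r addr0 subrr.
rewrite big_ord_recr /= mulrDr mulrnDl IH.
have e1 : a + L.+1%:R * b - b / 2 = (a + L%:R * b) + b / 2.
  by rewrite -addn1 natrD; field.
rewrite e1 (sinD (a + L%:R * b) (b / 2)) (sinB (a + L%:R * b) (b / 2)).
rewrite !mulr2n; ring.
Qed.

Lemma cos_sum_bound (a b : R) L :
  `|sin (b / 2)| * `|\sum_(m < L) cos (a + m%:R * b)| <= 1.
Proof.
have h := cos_tele a b L.
have : `|(sin (b / 2) * \sum_(m < L) cos (a + m%:R * b)) *+ 2| <= 2.
  rewrite h; apply: le_trans (ler_normB _ _) _.
  have := sin_max (a + L%:R * b - b / 2); have := sin_max (a - b / 2). lra.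
rewrite normrMn normrM -mulr_natr.
lra.
Qed.

Lemma sumx_lb (y : R) k L : 0 < `|sin (k%:R * y / 2)| ->
  L%:R / 2 - (2 * `|sin (k%:R * y / 2)|)^-1 <=
  \sum_(m < L) (1 - cos ((k * m).+1%:R * y)) / 2.
Proof.
move=> s0.
set s := `|sin _| in s0 *.
have e m : (k * m).+1%:R * y = y + m%:R * (k%:R * y).
  by rewrite -addn1 natrD natrM; ring.
under eq_bigr do rewrite e.
rewrite -mulr_suml sumrB sumr_const card_ord.
have hb := cos_sum_bound y (k%:R * y) L.
rewrite -/s in hb.
set S := \sum_(m < L) _ in hb *.
have hS : S <= s^-1.
  rewrite -(@ler_pM2l _ s) // mulfV ?gt_eqF //.
  apply: le_trans hb; rewrite ler_pM2l // ler_norm //.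
rewrite invfM -mulr_natr.
have hs : 0 < s^-1 by rewrite invr_gt0.
have e2 : (1 *+ L - S) / 2 = L%:R / 2 - S / 2 by rewrite mulrBl.
rewrite mul1r mulrBl lerD2l lerN2 mulrC.
by rewrite ler_wpM2l.
Qed.
End S.

Section M1.
Local Open Scope classical_set_scope.
Variable R : realType.
Import Normc.

Lemma sub_cvgR (u : nat -> R) (l : R) j : (0 < j)%N -> u @ \oo --> l ->
  (fun M => u (j * M)) @ \oo --> l.
Proof.
move=> j0 /cvgrPdist_lt H; apply/cvgrPdist_lt => e e0.
have [N _ HN] := H e e0.
exists N => // M /= hM; apply: HN; by rewrite /= (leq_trans hM) // leq_pmull.
Qed.

Lemma normc_dist (x y : CC R) : `|normc x - normc y| <= normc (x - y).
Proof.
rewrite ler_norml; apply/andP; split; last exact: normcB_ge.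
by rewrite lerNl opprB normcB; exact: normcB_ge.
Qed.

Lemma sub_cvgC (u : nat -> CC R) (L : CC R) j : (0 < j)%N -> u @ \oo --> L ->
  (fun M => normc (u (j * M))) @ \oo --> normc L.
Proof.
move=> j0 /cvgC_normP H; apply/cvgrPdist_lt => e e0.
have [N _ HN] := H e e0.
exists N => // M /= hM.
apply: le_lt_trans (normc_dist _ _) _.
apply: HN; by rewrite /= (leq_trans hM) // leq_pmull.
Qed.

Lemma final_arith (nA nB la lb G c : R) : 0 <= nA -> 0 <= nB -> 0 < la -> 0 < lb ->
  0 < G -> G^-1 <= c -> nA * lb * G <= nB * la -> nA / nB <= c * (la / lb).
Proof.
move=> nA0 nB0 la0 lb0 G0 Gc key.
have c0 : 0 <= c by apply: le_trans Gc; rewrite invr_ge0 ltW.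
have [->|nBp] := eqVneq nB 0.
  by rewrite invr0 mulr0 mulr_ge0 // divr_ge0 // ltW.
have nB1 : 0 < nB by rewrite lt0r nBp.
rewrite ler_pdivrMr //.
apply: (@le_trans _ _ (la / lb * G^-1 * nB)).
  rewrite -(@ler_pM2r _ (lb * G)) ?mulr_gt0 //.
  have -> : la / lb * G^-1 * nB * (lb * G) = nB * la.
    by field; rewrite gt_eqF //= gt_eqF.
  by rewrite mulrA.
apply: ler_wpM2r; first exact: ltW nB1.
rewrite [c * _]mulrC; apply: ler_wpM2l => //.
by rewrite divr_ge0 // ltW.
Qed.

Lemma rpow_half (k : nat) (eta : R) m : (0 < k)%N -> 0 < eta ->
  (m < Num.trunc ((2 * k%:R * eta)^-1))%N -> 1/2 <= expR (- eta) ^+ (k * m).+1.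
Proof.
move=> k0 e0 hm.
set X := (2 * k%:R * eta)^-1.
have X0 : 0 <= X by rewrite invr_ge0 !mulr_ge0 // ltW.
have hL : (Num.trunc X)%:R <= X by rewrite truncn_le.
have h1 : ((k * m).+1 <= k * Num.trunc X)%N.
  have : (m.+1 <= Num.trunc X)%N by [].
  move=> h; apply: leq_trans (leq_mul (leqnn k) h); rewrite mulnS; lia.
have h2 : ((k * m).+1)%:R <= k%:R * X.
  apply: le_trans (_ : (k * Num.trunc X)%:R <= _); first by rewrite ler_nat.
  by rewrite natrM ler_wpM2l.
have kX : k%:R * X * eta = 1/2.
  have kp : (k%:R : R) != 0 by rewrite pnatr_eq0 -lt0n.
  by rewrite /X; field; rewrite kp gt_eqF.
set n := (k * m).+1 in h1 h2 *.
have hn : n%:R * eta <= 1/2.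
  rewrite -kX ler_wpM2r // ltW //.
rewrite -expRM_natl.
apply: le_trans (expR_ge1Dx _).
rewrite mulrN; lra.
Qed.
End M1.

Section M2.
Local Open Scope classical_set_scope.
Variable R : realType.

Lemma Sx_lb (k : nat) (Delta eta y : R) : (2 <= k)%N -> 16 <= Delta -> 0 < eta ->
  Delta * eta <= `|y| -> `|y| < k%:R^-1 ->
  (32 * k%:R)^-1 / eta - 1/8 <=
  (\sum_(m < Num.trunc ((2 * k%:R * eta)^-1)) (1 - cos ((k * m).+1%:R * y)) / 2) / 4.
Proof.
move=> k2 D16 e0 hy hyk.
set kk : R := k%:R.
have kk2 : 2 <= kk by rewrite /kk (ler_nat R 2 k).
have kk0 : 0 < kk by lra.
have y0 : 16 * eta <= `|y|.
  by apply: le_trans hy; rewrite ler_wpM2r // ltW.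
have ky : kk * `|y| < 1.
  by move: hyk; rewrite -(@ltr_pM2l _ kk) // mulfV ?gt_eqF.
set t := kk * y / 2.
have nt : `|t| = kk * `|y| / 2 by rewrite /t !normrM (ger0_norm (ltW kk0)) normfV (@ger0_norm _ 2).
have hst : `|t| / 2 <= sin `|t|.
  apply: sin_ge_half; rewrite normr_ge0 /= nt; lra.
have hst2 : sin `|t| <= `|sin t|.
  case: (ger0P t) => ht; first by rewrite ler_norm.
  by rewrite sinN -normrN ler_norm.
set s := `|sin t|.
have hs : kk * `|y| / 4 <= s.
  have e : kk * `|y| / 4 = `|t| / 2 by rewrite nt; field.
  by rewrite e; apply: le_trans hst hst2.
have y1 : 0 < `|y|.
  have : 0 < 16 * eta by rewrite mulr_gt0.
  lra.
have s0 : 0 < s by apply: lt_le_trans hs; rewrite !mulr_gt0.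
have := @sumx_lb R y k (Num.trunc ((2 * k%:R * eta)^-1)).
rewrite -/t -/s => /(_ s0) hsum.
set Sx := \sum_(m < _) _ in hsum *.
set u := (8 * kk * eta)^-1.
have u0 : 0 < u by rewrite invr_gt0 !mulr_gt0.
have hinv : (2 * s)^-1 <= u.
  rewrite /u lef_pV2 ?posrE ?mulr_gt0 //.
  have : kk * (16 * eta) <= kk * `|y| by rewrite ler_wpM2l // ltW.
  lra.
set X := (2 * kk * eta)^-1 in hsum *.
have hX : X = 4 * u by rewrite /X /u; field; rewrite !gt_eqF.
have hL : X - 1 < (Num.trunc X)%:R.
  have := truncnS_gt X; rewrite -addn1 natrD; lra.
have he : (32 * kk)^-1 / eta = u / 4 by rewrite /u; field; rewrite !gt_eqF.
rewrite he.
move: hsum hL; rewrite hX => hsum hL.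
lra.
Qed.
End M2.

Section Core.
Local Open Scope classical_set_scope.
Variable R : realType.
Import Normc.

Lemma core (k : nat) (hk : (2 <= k)%N) (Delta eta y : R) :
  16 <= Delta -> 0 < eta -> Delta * eta <= `|y| -> `|y| < k%:R^-1 ->
  normc (lim ((fun N => \prod_(n < N) (1 - (qc R (expR (- eta)) y) ^+ k * ((qc R (expR (- eta)) y) ^+ k) ^+ n)) @ \oo)
         / lim ((fun N => \prod_(n < N) (1 - (qc R (expR (- eta)) y) * (qc R (expR (- eta)) y) ^+ n)) @ \oo) : CC R)
  <= expR (1/8) * (lim ((fun N => \prod_(n < N) (1 - expR (- eta) ^+ k * (expR (- eta) ^+ k) ^+ n)) @ \oo)
                  / lim ((fun N => \prod_(n < N) (1 - expR (- eta) * expR (- eta) ^+ n)) @ \oo))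
     * expR (- ((32 * k%:R)^-1 / eta)).
Proof.
move=> D16 e0 hy hyk.
set r := expR (- eta).
set q := qc R r y.
have k0 : (0 < k)%N by apply: leq_trans hk.
have k1 : (1 < k)%N by [].
have r0 : 0 <= r by apply: expR_ge0.
have r1 : r < 1 by rewrite /r expR_lt1 oppr_lt0.
have hr : 0 <= r < 1 by rewrite r0.
have hr' : 0 <= r <= 1 by rewrite r0 ltW.
have nq : normc q = r by apply: normc_qc.
have rk1 : r ^+ k < 1 by rewrite exprn_ilt1 // -lt0n.
have rk0 : 0 <= r ^+ k by apply: exprn_ge0.
have hrk : 0 <= r ^+ k < 1 by rewrite rk0.
set A := fun N => _ : CC R.
set B := fun N => _ : CC R.
set a := fun N => _ : R.
set b := fun N => _ : R.
have cA : cvg (A @ \oo).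
  by apply: ppC_cvg; rewrite normcX nq.
have cB : cvg (B @ \oo) by apply: ppC_cvg; rewrite nq.
have [ca la0] := ppR_cvg R (r ^+ k) hrk.
have [cb lb0] := ppR_cvg R r hr.
have {}ca : cvgn a := ca.
have {}cb : cvgn b := cb.
have {}la0 : 0 < limn a := la0.
have {}lb0 : 0 < limn b := lb0.
set LA := limn A in cA *.
set LB := limn B in cB *.
set la := limn a in ca la0 *.
set lb := limn b in cb lb0 *.
set L := Num.trunc ((2 * k%:R * eta)^-1).
set Sx := \sum_(m < L) (1 - cos ((k * m).+1%:R * y)) / 2.
have hSx : (32 * k%:R)^-1 / eta - 1/8 <= Sx / 4 by apply: (@Sx_lb R k Delta).
set G := expR (Sx / 4).
have G0 : 0 < G by apply: expR_gt0.
have DD0 M : 0 <= DD R k r M.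
  by rewrite /DD; apply: prodr_ge0 => m _; exact: (blk_ge R r y k m hr').1.
have hD M : (L <= M)%N -> DD R k r M * G <= normc (DD (CC R) k q M).
  move=> hLM.
  pose x' m := if (m < L)%N then (1 - cos ((k * m).+1%:R * y)) / 2 else 0.
  have x0 m : 0 <= x' m.
    rewrite /x'; case: ifP => // _; have := cos_le1 ((k * m).+1%:R * y); lra.
  have x1 m : x' m <= 1.
    rewrite /x'; case: ifP => // _; have := cos_geN1 ((k * m).+1%:R * y); lra.
  have hb m : (Dblk R k r m) ^+ 2 * (1 + x' m) <= normc (Dblk (CC R) k q m) ^+ 2.
    rewrite /x'; case: ifP => hm.
      apply: blk_ge2 => //; exact: rpow_half.
    rewrite addr0 mulr1; have [p0 p1] := blk_ge R r y k m hr'.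
    by rewrite ler_pXn2r ?nnegrE // (le_trans p0 p1).
  have hDD := DD_ge R r y k M x' hr' x0 hb.
  have hp : expR (Sx / 2) <= \prod_(m < M) (1 + x' m).
    have -> : Sx = \sum_(m < M) x' m.
      rewrite /Sx (big_ord_widen M (fun m => (1 - cos ((k * m).+1%:R * y)) / 2) hLM).
      by rewrite big_mkcond /=.
    rewrite mulr_suml expR_sum; apply: ler_prod => m _; rewrite expR_ge0 /=.
    by apply: expR_half_le; rewrite x0 x1.
  have hsq : (DD R k r M * G) ^+ 2 <= normc (DD (CC R) k q M) ^+ 2.
    apply: le_trans hDD; rewrite exprMn; apply: ler_wpM2l; first exact: sqr_ge0.
    apply: le_trans hp.
    rewrite /G -expRM_natr; have -> : Sx / 4 * 2%:R = Sx / 2 by field.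
    by [].
  have n0 := @normc_ge0 R (DD (CC R) k q M).
  have m0 : 0 <= DD R k r M * G by rewrite mulr_ge0 // ltW.
  by rewrite -(@ler_pXn2r _ 2) ?nnegrE.
have a0 M : 0 <= a M.
  exact: le_trans (expR_ge0 _) (ppR_lb R (r ^+ k) M hrk).
have key M : (L <= M)%N -> normc (A M) * b (k * M) * G <= normc (B (k * M)) * a M.
  move=> hLM.
  have e1 : B (k * M) = A M * DD (CC R) k q M := pp_split (CC R) k k0 q M.
  have e2 : b (k * M) = a M * DD R k r M := pp_split R k k0 r M.
  rewrite e1 e2 normcM.
  have -> : normc (A M) * (a M * DD R k r M) * G = (normc (A M) * a M) * (DD R k r M * G) by ring.
  have -> : normc (A M) * normc (DD (CC R) k q M) * a M = (normc (A M) * a M) * normc (DD (CC R) k q M) by ring.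
  apply: ler_wpM2l; first by rewrite mulr_ge0 // normc_ge0.
  exact: hD.
have s1 : (fun M => normc (B (k * M)) * a M) @ \oo --> normc LB * la.
  apply: cvgM => //; exact: (sub_cvgC R B LB k k0 cB).
have nA : (fun M => normc (A M)) @ \oo --> normc LA.
  have := sub_cvgC R A LA 1 isT cA.
  by rewrite (_ : (fun M => normc (A (1 * M))) = (fun M => normc (A M))) //; apply/funext => M; rewrite mul1r.
have s2 : (fun M => normc (A M) * b (k * M) * G) @ \oo --> normc LA * lb * G.
  apply: cvgM; last exact: cvg_cst.
  apply: cvgM => //; exact: (sub_cvgR R b lb k k0 cb).
have hle : normc LA * lb * G <= normc LB * la.
  have := @ler_lim _ _ _ R (fun M => normc (A M) * b (k * M) * G) (fun M => normc (B (k * M)) * a M) (cvgP _ s2) (cvgP _ s1).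
  rewrite (cvg_lim (@Rhausdorff R) s1) (cvg_lim (@Rhausdorff R) s2); apply.
  by exists L => // M /= hM; apply: key.
rewrite normcM normcV.
have hc : G^-1 <= expR (1/8) * expR (- ((32 * k%:R)^-1 / eta)).
  rewrite /G -expRN -expRD ler_expR; lra.
have := @final_arith R _ _ _ _ _ _ (@normc_ge0 R LA) (@normc_ge0 R LB) la0 lb0 G0 hc hle.
move=> h; apply: le_trans h _.
by rewrite mulrAC.
Qed.

End Core.

Theorem lemma3p10 (R : realType) (k : nat) (hk : (2 <= k)%N) :
  exists Delta0 : R, forall Delta : R, Delta0 <= Delta ->
    exists eps : R, 0 < eps /\
    exists C : R, 0 < C /\
    exists delta : R, 0 < delta /\
    forall eta y : R,
      0 < eta -> Delta * eta <= `|y| -> `|y| <= pi ->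
      eta < delta -> `|y| < delta ->
      Normc.normc (xi k (qexp eta y))
        <= C * xi k (expR (- eta)) * expR (- (eps / eta)).
Proof.
exists 16 => Delta hD.
have k0 : 0 < (k%:R : R) by rewrite ltr0n; apply: leq_trans hk.
exists (32 * k%:R)^-1; split; first by rewrite invr_gt0 mulr_gt0.
exists (expR (1/8)); split; first exact: expR_gt0.
exists k%:R^-1; split; first by rewrite invr_gt0.
move=> eta y e0 hy _ _ hyk.
exact: (core R k hk Delta eta y hD e0 hy hyk).
Qed.
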